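(* Consider a distributed storage system $\mathrm{DSS}(n,k,d,h,\alpha,\alpha',\beta,M)$ with $1\le k\le d\le n-1$, $h\ge 0$. Then in its information flow graph there exist a sequence of $k$ failures/repairs and a data collector whose minimum $S$–$\mathrm{DC}$ cut has capacity at most $$\sum_{i=0}^{k-1}\min\{\alpha,\,(d+h-i)\beta\}.$$ Consequently, if every data collector can reconstruct the file of size $M$ under all failure/repair sequences, then $\sum_{i=0}^{k-1}\min\{\alpha,(d+h-i)\beta\}\ge M$.
   Context: $\mathrm{DSS}(n,k,d,h,\alpha,\alpha',\beta,M)$: a file of $M$ packets is stored on $n$ complete storage nodes of capacity $\alpha$ each so that any $k$ of them reconstruct the file; in addition there are $h$ repairing storage nodes of capacity $\alpha'<\alpha$, which receive data from the source, never fail and are never contacted by data collectors. When a complete node fails, a new node is created receiving $\beta$ packets from each of $d$ surviving complete nodes and from each of the $h$ repairing nodes. Information flow graph: source $S$; each complete node $x$ is a pair $x_{in}\to x_{out}$ with capacity $\alpha$, initial nodes have edges $S\to x_{in}$; each repairing node $r$ is a pair $r_{in}\to r_{out}$ with capacity $\alpha'$ and edge $S\to r_{in}$; at each repair the new node $y$ gets edges of capacity $\beta$ from $x_{out}$ of the $d$ chosen active complete nodes and from $r_{out}$ of all $h$ repairing nodes; a data collector has infinite-capacity edges from the out-vertices of some $k$ active complete nodes. *)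

(* Defs.v *)
From mathcomp Require Import all_boot.
Set Implicit Arguments. Unset Strict Implicit. Unset Printing Implicit Defensive.

(* Complete storage nodes are numbered: initial nodes 0..n-1, the node created
   at repair step t (t = 0,1,...) gets number n + t. *)
Inductive vertex : Type :=
| Src
| Dc
| CIn  of nat
| COut of nat
| RIn  of nat
| ROut of nat.

(* An edge: tail, head, capacity; capacity None = infinite. *)
Definition edge := (vertex * vertex * option nat)%type.

(* A failure/repair step: (failed complete node, list of the d helper
   complete nodes). *)
Definition step := (nat * seq nat)%type.

(* Run a sequence of failures/repairs starting from the set of active complete
   nodes [act], where the next new node gets number [next]. *)
Fixpoint run (d : nat) (act : seq nat) (next : nat) (s : seq step) : option (seq nat) :=
  match s with
  | [::] => Some act
  | (f, hs) :: s' =>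
      if [&& f \in act, uniq hs, size hs == d, f \notin hs & all (mem act) hs]
      then run d (next :: rem f act) next.+1 s'
      else None
  end.

Fixpoint repair_edges (h alpha beta next : nat) (s : seq step) : seq edge :=
  match s with
  | [::] => [::]
  | (_, hs) :: s' =>
      (CIn next, COut next, Some alpha)
      :: [seq (COut x, CIn next, Some beta) | x <- hs]
      ++ [seq (ROut r, CIn next, Some beta) | r <- iota 0 h]
      ++ repair_edges h alpha beta next.+1 s'
  end.

Definition flow_graph (n h alpha alpha' beta : nat) (s : seq step) (dc : seq nat)
  : seq edge :=
  [seq (Src, CIn x, None) | x <- iota 0 n]
  ++ [seq (CIn x, COut x, Some alpha) | x <- iota 0 n]
  ++ [seq (Src, RIn r, None) | r <- iota 0 h]
  ++ [seq (RIn r, ROut r, Some alpha') | r <- iota 0 h]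
  ++ repair_edges h alpha beta n s
  ++ [seq (COut x, Dc, None) | x <- dc].

Definition valid_scenario (n k d : nat) (s : seq step) (dc : seq nat) : Prop :=
  exists act, run d (iota 0 n) n s = Some act
              /\ uniq dc /\ size dc = k /\ all (mem act) dc.

(* An S-DC cut is given by the side [C] containing the source (C Src = true,
   C Dc = false). *)
Definition is_cut (C : vertex -> bool) : Prop := C Src = true /\ C Dc = false.

Fixpoint cut_capacity (C : vertex -> bool) (es : seq edge) : option nat :=
  match es with
  | [::] => Some 0
  | (u, v, c) :: es' =>
      if C u && ~~ C v then
        match c, cut_capacity C es' with
        | Some a, Some b => Some (a + b)
        | _, _ => None
        end
      else cut_capacity C es'
  end.

Definition cut_bound (k d h alpha beta : nat) : nat :=
  \sum_(i < k) minn alpha ((d + h - i) * beta).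

(* Main.v *)
Require Import Defs.
From mathcomp Require Import all_boot.
From mathcomp Require Import zify.

Definition oadd (a b : option nat) :=
  match a, b with Some x, Some y => Some (x + y) | _, _ => None end.

Lemma cut_cat C (a b : seq edge) :
  cut_capacity C (a ++ b) = oadd (cut_capacity C a) (cut_capacity C b).
Proof.
elim: a => [|[[u v] c] a IH] /=.
  by case: (cut_capacity C b).
case: (C u && ~~ C v); rewrite IH //.
case: c => [c|] //; case: (cut_capacity C a) => [x|] //;
  case: (cut_capacity C b) => [y|] //=. by rewrite addnA.
Qed.

Lemma cut_nocross C (es : seq edge) :
  all (fun e : edge => ~~ (C e.1.1 && ~~ C e.1.2)) es -> cut_capacity C es = Some 0.
Proof.
elim: es => [|[[u v] c] es IH] //= /andP [H1 H2].
by rewrite (negbTE H1) IH.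
Qed.

Lemma cut_map C (T : Type) (g : T -> vertex) v b (s : seq T) :
  cut_capacity C [seq (g x, v, Some b) | x <- s] =
  Some (b * count (fun x => C (g x) && ~~ C v) s).
Proof.
elim: s => [|x s IH] /=; first by rewrite muln0.
case: (C (g x) && ~~ C v); rewrite IH //=.
by rewrite mulnDr muln1.
Qed.

Section S.
Variables (n k d h alpha alpha' beta : nat).

Definition cheap i := alpha <= (d + h - i) * beta.
Definition Cf (v : vertex) : bool :=
  match v with
  | Src => true | Dc => false
  | CIn x => (x < n) || cheap (x - n)
  | COut x => x < n
  | RIn _ => true | ROut _ => true
  end.
Definition mkstep (i : nat) : step := (i, iota n i ++ iota i.+1 (d - i)).
Definition F i := minn alpha ((d + h - i) * beta).

Lemma rep_cut (Hdn : d <= n - 1) m : forall j, j + m <= d ->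
  cut_capacity Cf (repair_edges h alpha beta (n + j) (map mkstep (iota j m)))
  = Some (\sum_(i <- iota j m) F i).
Proof.
elim: m => [|m IH] j Hj; first by rewrite big_nil.
rewrite /= big_cons -addnS cut_cat cut_map cut_cat cut_map (IH j.+1) ?addSnnS //.
rewrite /=.
have -> : (n + j < n) = false by lia.
rewrite addKn /F.

have nj : (n + j.+1 <= n) = false by lia.
case Hc: (cheap j) => /=.
  rewrite orbT nj /=.
  have c0 : forall (s : seq nat) (p : pred nat), count (fun x => p x && false) s = 0.
    by move=> s p; elim: s => //= x s ->; rewrite andbF.
  have c1 : forall (s : seq nat), count xpred0 s = 0 by elim => //=.
  rewrite c0 c1 !muln0 !add0n. congr (Some (_ + _)).
  by apply/esym/minn_idPl.
rewrite orbF nj /=.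
have cT : forall (s : seq nat), count xpredT s = size s by elim => //= x s ->.
have c2 : forall (s : seq nat) (p : pred nat), count (fun x => p x && true) s = count p s.
  by move=> s p; apply: eq_count => x; rewrite andbT.
rewrite cT c2 size_iota count_cat (@eq_in_count _ _ pred0) ?count_pred0; last first.
  by move=> x; rewrite mem_iota /=; lia.
rewrite (@eq_in_count _ _ predT) ?count_predT ?size_iota; last first.
  by move=> x; rewrite mem_iota /=; lia.
move: Hc; rewrite /cheap => /negbT; rewrite -ltnNge => Hc.
have -> : minn alpha ((d + h - j) * beta) = (d + h - j) * beta.
  by apply/minn_idPr/ltnW.
have -> : d + h - j = (d - j) + h by lia.
rewrite mulnDl [beta * _]mulnC [beta * h]mulnC.
congr Some. lia.
Qed.

Lemma run_ok (Hdn : d <= n - 1) m : forall j act, j + m <= d -> uniq act ->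
  act =i [pred x | (n <= x < n + j) || (j <= x < n)] ->
  exists act', run d act (n + j) (map mkstep (iota j m)) = Some act' /\
    act' =i [pred x | (n <= x < n + j + m) || (j + m <= x < n)].
Proof.
elim: m => [|m IH] j act Hj Hu Ha.
  by exists act; split => // x; rewrite Ha inE /= !addn0.
rewrite /=.
have -> : [&& j \in act, uniq (iota n j ++ iota j.+1 (d - j)),
    size (iota n j ++ iota j.+1 (d - j)) == d,
    j \notin iota n j ++ iota j.+1 (d - j) &
    all (mem act) (iota n j ++ iota j.+1 (d - j))].
  apply/and5P; split.
  - rewrite Ha inE /=; lia.
  - rewrite cat_uniq !iota_uniq /= andbT; apply/hasPn => x.
    rewrite !mem_iota; lia.
  - rewrite size_cat !size_iota; apply/eqP; lia.
  - rewrite mem_cat !mem_iota; lia.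
  - apply/allP => x; rewrite mem_cat !mem_iota /= Ha inE /=; lia.
rewrite -addnS.
have Hj' : j.+1 + m <= d by lia.
have Hu' : uniq (n + j :: rem j act).
  rewrite /= rem_uniq // andbT (mem_rem_uniq _ Hu) inE Ha inE /=; lia.
have Ha' : (n + j :: rem j act) =i [pred x | (n <= x < n + j.+1) || (j.+1 <= x < n)].
  move=> x; rewrite in_cons (mem_rem_uniq _ Hu) !inE Ha inE /=.
  case: (eqVneq x (n + j)) => [->|Hx] /=; first lia.
  case: (eqVneq x j) => [->|Hx'] /=; lia.
have [act' [H1 H2]] := IH j.+1 _ Hj' Hu' Ha'.
exists act'; split => // x; rewrite H2 !inE /=; lia.
Qed.

End S.

Theorem proposition2 (n k d h alpha alpha' beta M : nat) :
  1 <= k -> k <= d -> d <= n - 1 -> alpha' < alpha ->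
  (* there is a sequence of k failures/repairs and a data collector with an
     S-DC cut of capacity at most the bound (so min cut <= bound) *)
  (exists (s : seq step) (dc : seq nat),
      size s = k /\ valid_scenario n k d s dc /\
      exists C c, is_cut C /\
        cut_capacity C (flow_graph n h alpha alpha' beta s dc) = Some c /\
        c <= cut_bound k d h alpha beta)
  /\
  (* consequently: if every data collector, after every failure/repair
     sequence, has min cut >= M (i.e. can reconstruct the file), the bound
     is >= M *)
  ((forall (s : seq step) (dc : seq nat), valid_scenario n k d s dc ->
      forall C c, is_cut C ->
        cut_capacity C (flow_graph n h alpha alpha' beta s dc) = Some c ->
        M <= c) ->
   M <= cut_bound k d h alpha beta).
Proof.
move=> Hk Hkd Hdn Ha.
have Hval : valid_scenario n k d (map (mkstep n d) (iota 0 k)) (iota n k).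
  have [|||act [H1 H2]] := @run_ok n d Hdn k 0 (iota 0 n).
  - lia.
  - exact: iota_uniq.
  - by move=> x; rewrite mem_iota !inE /=; lia.
  exists act; rewrite addn0 in H1; split => //; split; first exact: iota_uniq.
  split; first by rewrite size_iota.
  by apply/allP => x; rewrite mem_iota /= H2 !inE /=; lia.
have Hcut : cut_capacity (Cf n d h alpha beta)
    (flow_graph n h alpha alpha' beta (map (mkstep n d) (iota 0 k)) (iota n k))
    = Some (cut_bound k d h alpha beta).
  rewrite /flow_graph !cut_cat.
  have E1 : cut_capacity (Cf n d h alpha beta) [seq (Src, CIn x, None) | x <- iota 0 n] = Some 0.
    by apply: cut_nocross; rewrite all_map; apply/allP => x Hx /=; rewrite mem_iota in Hx; apply/negP; lia.
  have E2 : cut_capacity (Cf n d h alpha beta) [seq (CIn x, COut x, Some alpha) | x <- iota 0 n] = Some 0.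
    by apply: cut_nocross; rewrite all_map; apply/allP => x Hx /=; rewrite mem_iota in Hx; apply/negP; lia.
  have E3 : cut_capacity (Cf n d h alpha beta) [seq (Src, RIn r, None) | r <- iota 0 h] = Some 0.
    by apply: cut_nocross; rewrite all_map; apply/allP => x Hx.
  have E4 : cut_capacity (Cf n d h alpha beta) [seq (RIn r, ROut r, Some alpha') | r <- iota 0 h] = Some 0.
    by apply: cut_nocross; rewrite all_map; apply/allP => x Hx.
  have E6 : cut_capacity (Cf n d h alpha beta) [seq (COut x, Dc, None) | x <- iota n k] = Some 0.
    by apply: cut_nocross; rewrite all_map; apply/allP => x Hx /=; rewrite mem_iota in Hx; apply/negP; lia.
  rewrite E1 E2 E3 E4 E6.
  have := @rep_cut n d h alpha beta Hdn k 0.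
  rewrite addn0 => -> //=.
  have -> : cut_bound k d h alpha beta = \sum_(0 <= i < k) F d h alpha beta i by rewrite /cut_bound big_mkord.
  by rewrite !add0n addn0 /index_iota subn0.
split.
  exists (map (mkstep n d) (iota 0 k)), (iota n k).
  split; first by rewrite size_map size_iota.
  split => //.
  by exists (Cf n d h alpha beta), (cut_bound k d h alpha beta).
move=> HM.
exact: (HM _ _ Hval (Cf n d h alpha beta) _ (conj erefl erefl) Hcut).
Qed.
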